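(* Let $k$ be a positive integer and let $(U,V,E)$ be a finite bipartite graph with parts $U,V$, $|U|=m$ and $|V|=n$. Let $\mathcal{P}$ be a partition of $V$ in which every part has size at most $\frac{n}{2k}$, and suppose each vertex $u\in U$ has neighbours in fewer than $k$ parts of $\mathcal{P}$. Then there exist $A\subseteq U$ and $B\subseteq V$ with $|A|\ge \frac{m}{k}$ and $|B|\ge\frac{n}{2k}$ such that there is no edge between $A$ and $B$. *)

(* Defs.v *)
From mathcomp Require Import all_boot.
Set Implicit Arguments. Unset Strict Implicit. Unset Printing Implicit Defensive.

Definition nparts_hit (U V : finType) (E : U -> V -> bool) (P : {set {set V}}) (u : U) : nat :=
  #|[set S in P | [exists v in S, E u v]]|.

(* Main.v *)
Require Import Defs.
From mathcomp Require Import all_boot.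
From mathcomp Require Import zify.

Section Claim.
Variables (k : nat) (U V : finType) (E : U -> V -> bool) (P : {set {set V}}).
Hypothesis hP : forall S, S \in P -> 2 * k * #|S| <= #|V|.

Definition wt (X : {set {set V}}) := \sum_(S in X) #|S|.
Definition hit (u : U) (X : {set {set V}}) :=
  #|[set S in X | [exists v in S, E u v]]|.

Lemma claim j : forall (Q : {set {set V}}) (U' : {set U}),
  Q \subset P -> j.+1 * #|V| <= k * wt Q ->
  (forall u, u \in U' -> hit u Q < j.+1) ->
  exists (A : {set U}) (QB : {set {set V}}),
    [/\ QB \subset Q, #|U'| <= j.+1 * #|A|, #|V| <= 2 * k * wt QB &
        forall a S b, a \in A -> S \in QB -> b \in S -> ~~ E a b].
Proof.
elim: j => [|j IH] Q U' sQP hQ hU.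
  exists U', Q; split => //; [by rewrite mul1n | nia | idtac].
  move=> a S b aU SQ bS; apply/negP => Eab.
  have := hU a aU; rewrite ltnS leqn0 cards_eq0 => /eqP/setP/(_ S).
  rewrite in_set0 inE SQ /=; move/negbT/negP; apply.
  by apply/existsP; exists b; rewrite bS.
pose Pr := fun X : {set {set V}} => (X \subset Q) && (#|V| <= 2 * k * wt X).
have PQ : Pr Q.
  have h1 : #|V| <= j.+2 * #|V| by rewrite leq_pmull.
  rewrite /Pr subxx /= -mulnA; move: hQ h1; set x := k * wt Q; set y := j.+2 * #|V|; idtac.
  clearbody x y. move=> a b. have : #|V| <= 2 * x by apply: leq_trans b _; apply: leq_trans a _; rewrite leq_pmull. by [].
have [QB [sQB hQB QBmin]] : exists QB : {set {set V}},
    [/\ QB \subset Q, #|V| <= 2 * k * wt QB & forall X : {set {set V}}, Pr X -> #|QB| <= #|X|].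
  case: (@arg_minnP _ Q Pr (fun X : {set {set V}} => #|X|) PQ) => QB /andP [sQB hQB] QBmin.
  by exists QB; split.
have kQB : k * wt QB <= #|V|.
  have [->|[S SQB]] := set_0Vmem QB; first by rewrite /wt big_set0 muln0.
  have := QBmin (QB :\ S).
  have lt : #|QB :\ S| < #|QB| by rewrite (cardsD1 S QB) SQB.
  rewrite /Pr (subset_trans (subD1set _ _) sQB) /=.
  case: leqP => [_ /(_ isT)|h _]; first by rewrite leqNgt lt.
  have SP : S \in P by apply: (subsetP sQP); apply: (subsetP sQB).
  have := hP S SP.
  have -> : wt QB = #|S| + wt (QB :\ S).
    rewrite /wt (bigD1 S) //=; congr (_ + _).
    by apply: eq_bigl => X; rewrite !inE andbC.
  move: h; rewrite mulnDr -!mulnA; move: (k * #|S|) (k * wt (QB :\ S)) #|V| => a b c; lia.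
pose A0 := [set u in U' | [forall S in QB, forall v in S, ~~ E u v]].
case: (leqP #|U'| (j.+2 * #|A0|)) => hA0.
  exists A0, QB; split => //.
  move=> a S b; rewrite inE => /andP [_ /forallP /(_ S) /implyP H] SQ bS.
  by move: (H SQ) => /forallP /(_ b) /implyP; apply.
pose U'' := U' :\: A0.
have sA0 : A0 \subset U' by apply/subsetP => u; rewrite inE => /andP [].
have cU : #|A0| + #|U''| = #|U'|.
  by rewrite -(cardsID A0 U') (setIidPr sA0).
have wQ : wt Q = wt QB + wt (Q :\: QB).
  by rewrite /wt (big_setID QB) /=; congr (_ + _); apply: eq_bigl => X; rewrite (setIidPr sQB).
have := IH (Q :\: QB) U'' (subset_trans (subsetDl _ _) sQP).
case.
- move: hQ; rewrite wQ; lia.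
- move=> u; rewrite inE => /andP [uA0 uU].
  have huQ := hU u uU.
  suff : hit u (Q :\: QB) < hit u Q by lia.
  apply: proper_card; apply/properP; split.
    by apply/subsetP => S; rewrite !inE => /andP [/andP [_ ->] ->].
  move: uA0; rewrite inE uU /= negb_forall => /existsP [S].
  rewrite negb_imply negb_forall => /andP [SQB /existsP [v]].
  rewrite negb_imply negbK => /andP [vS Euv].
  exists S; first by rewrite inE (subsetP sQB) //=; apply/existsP; exists v; rewrite vS.
  by rewrite !inE SQB.
move=> A [QB' [sQB' hA hQB' hE]].
exists A, QB'; split => //.
- exact: subset_trans sQB' (subsetDl _ _).
- nia.
Qed.
End Claim.

Theorem lemma3p1 (k : nat) (U V : finType) (E : U -> V -> bool)
    (P : {set {set V}}) :
  0 < k ->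
  partition P [set: V] ->
  (forall S, S \in P -> 2 * k * #|S| <= #|V|) ->
  (forall u : U, nparts_hit E P u < k) ->
  exists (A : {set U}) (B : {set V}),
    [/\ #|U| <= k * #|A|, #|V| <= 2 * k * #|B| &
        forall a b, a \in A -> b \in B -> ~~ E a b].
Proof.
case: k => // j _ hpart hP hu.
have wP : wt V P = #|V| by rewrite /wt -(card_partition hpart) cardsT.
have := @claim j.+1 U V E P hP j P [set: U] (subxx _).
case.
- by rewrite wP.
- by move=> u _; apply: hu.
move=> A [QB [sQB hA hQB hE]].
exists A, (cover QB); split.
- by rewrite -cardsT.
- suff -> : #|cover QB| = wt V QB by [].
  apply: card_partition.
  move: hpart => /and3P [_ tP n0].
  rewrite /partition eqxx (trivIsetS sQB tP) /=.
  by apply: contra n0; apply: (subsetP sQB).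
- move=> a b aA /bigcupP [S SQB bS]; exact: hE aA SQB bS.
Qed.
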